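(* Let $P>0$ and $\sigma_b^2>0$. For each integer $L\ge1$ let $\beta_L\in(0,1)$ be the solution of $$\frac{(1-\beta^{2L})^2}{L^2\beta^{2L}(1-\beta^2)}=\frac{P}{\sigma_b^2 L},$$ and let $C_{sum}^{(L)}=-L\log_2(\beta_L)$. Then $$\lim_{L\to\infty}C_{sum}^{(L)}=\frac{\alpha}{\ln 2},$$ where $\alpha>0$ satisfies $$\frac{(1-e^{-2\alpha})^2}{2\alpha e^{-2\alpha}}=\frac{P}{\sigma_b^2}.$$
   Context: $C_{sum}^{(L)}$ is the maximum sum rate, with perfect feedback and broadcast SNR $P/\sigma_b^2$, of the $L$-user BMCL linear feedback scheme for the real AWGN broadcast channel with feedback; the claim is a statement about the displayed quantities only. *)

(* Defs.v *)
From Stdlib Require Import Reals.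
From Coquelicot Require Import Coquelicot.
Open Scope R_scope.

Definition log2 (x : R) : R := ln x / ln 2.

Definition beta_eq (P sb2 : R) (L : nat) (b : R) : Prop :=
  (1 - b ^ (2 * L)) ^ 2 / (INR L ^ 2 * b ^ (2 * L) * (1 - b ^ 2))
  = P / (sb2 * INR L).

Definition alpha_eq (P sb2 a : R) : Prop :=
  (1 - exp (-2 * a)) ^ 2 / (2 * a * exp (-2 * a)) = P / sb2.

Definition Csum (beta : nat -> R) (L : nat) : R := - INR L * log2 (beta L).

(* Main.v *)
Require Import Defs.
From Stdlib Require Import Reals Lra Lia.
From Coquelicot Require Import Coquelicot.
Open Scope R_scope.
Definition G2 (a : R) := (exp a - exp (-a))^2 / (2*a).
Lemma G2_der (a : R) : 0 < a -> is_derive G2 a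
  ((exp a - exp (-a)) * (2*a*(exp a + exp (-a)) - (exp a - exp (-a))) / (2*a^2)).
Proof. intro Ha. unfold G2. auto_derive. lra. field. lra. Qed.

Lemma G2_der_pos (a : R) : 0 < a ->
  0 < (exp a - exp (-a)) * (2*a*(exp a + exp (-a)) - (exp a - exp (-a))) / (2*a^2).
Proof.
  intro Ha.
  assert (Hu : exp (-a) < exp a) by (apply exp_increasing; lra).
  assert (Hv : 0 < exp (-a)) by apply exp_pos.
  assert (H1 := exp_ineq1_le (-2*a)).
  assert (Hm : exp (-2*a) = exp (-a) * exp (-a)) by (rewrite <- exp_plus; f_equal; ring).
  assert (Hp : exp a * exp (-a) = 1) by (rewrite <- exp_plus; replace (a + -a) with 0 by ring; apply exp_0).
  assert (Hk : exp a - exp (-a) <= 2*a*exp a).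
  { rewrite Hm in H1. 
    assert (exp a * (1 + -2*a) <= exp a * (exp (-a) * exp (-a))).
    { apply Rmult_le_compat_l. left; apply exp_pos. exact H1. }
    replace (exp a * (exp (-a) * exp (-a))) with (exp (-a)) in H by (rewrite <- Rmult_assoc, Hp; ring).
    lra. }
  apply Rdiv_lt_0_compat. apply Rmult_lt_0_compat. lra. nra. nra.
Qed.

Lemma G2_strict (x y : R) : 0 < x -> x < y -> G2 x < G2 y.
Proof.
  intros Hx Hxy.
  destruct (MVT_cor2 G2 (fun a => (exp a - exp (-a)) * (2*a*(exp a + exp (-a)) - (exp a - exp (-a))) / (2*a^2)) x y Hxy) as [c [Hc1 Hc2]].
  { intros c Hc. apply is_derive_Reals. apply G2_der. lra. }
  assert (0 < (exp c - exp (-c)) * (2*c*(exp c + exp (-c)) - (exp c - exp (-c))) / (2*c^2)) by (apply G2_der_pos; lra).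
  nra.
Qed.
Definition G (a : R) := (1 - exp (-2 * a)) ^ 2 / (2 * a * exp (-2 * a)).
Lemma G_G2 a : 0 < a -> G a = G2 a.
Proof.
  intro Ha. unfold G, G2.
  assert (Hm : exp (-2*a) = exp (-a) * exp (-a)) by (rewrite <- exp_plus; f_equal; ring).
  assert (Hp : exp a = / exp (-a)) by (rewrite exp_Ropp, Rinv_inv; auto).
  assert (Hv : 0 < exp (-a)) by apply exp_pos.
  rewrite Hm, Hp. field. lra.
Qed.
Lemma G_strict (x y : R) : 0 < x -> x < y -> G x < G y.
Proof. intros. rewrite !G_G2 by lra. now apply G2_strict. Qed.
Lemma G_le_inv x y : 0 < x -> 0 < y -> G x <= G y -> x <= y.
Proof. intros. destruct (Rle_lt_dec x y); auto. assert (G y < G x) by (apply G_strict; lra). lra. Qed.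

Lemma per_L (S : R) (L : nat) (b : R) : (1 <= L)%nat -> 0 < b < 1 ->
  (1 - b ^ (2 * L)) ^ 2 / (INR L ^ 2 * b ^ (2 * L) * (1 - b ^ 2)) = S / INR L ->
  let a := - INR L * ln b in
  0 < a /\ G a <= S /\ S <= G a * (1 + 2 * a / INR L).
Proof.
  intros HL Hb Heq a.
  assert (HLp : 0 < INR L) by (apply lt_0_INR; lia).
  assert (Hlnb : ln b < 0) by (rewrite <- ln_1; apply ln_increasing; lra).
  assert (Ha : 0 < a) by (unfold a; nra).
  assert (Hlb : ln b = - a / INR L) by (unfold a; field; lra).
  assert (HB : b ^ (2 * L) = exp (-2 * a)).
  { rewrite <- Rpower_pow by lra. unfold Rpower. rewrite mult_INR, Hlb. f_equal. simpl. field. lra. }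
  assert (Hb2 : b ^ 2 = exp (-2 * a / INR L)).
  { rewrite <- (Rpower_pow 2) by lra. unfold Rpower. rewrite Hlb. f_equal. simpl. field. lra. }
  rewrite HB, Hb2 in Heq.
  set (B := exp (-2*a)) in *. set (c := exp (-2 * a / INR L)) in *.
  assert (HBp : 0 < B) by apply exp_pos.
  assert (HB1 : B < 1) by (unfold B; rewrite <- exp_0; apply exp_increasing; lra).
  assert (Hc0 : 0 < c) by apply exp_pos.
  assert (Hc1 : 1 - 2 * a / INR L <= c) by (unfold c; generalize (exp_ineq1_le (-2*a/INR L)); intro; lra).
  assert (Hc2 : c * (1 + 2 * a / INR L) <= 1).
  { assert (H := exp_ineq1_le (2*a/INR L)).
    assert (Hi : c * exp (2*a/INR L) = 1) by (unfold c; rewrite <- exp_plus; replace (-2 * a / INR L + 2 * a / INR L) with 0 by (field; lra); apply exp_0).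
    rewrite <- Hi. apply Rmult_le_compat_l; lra. }
  assert (HcL : c < 1) by (assert (0 < 2 * a / INR L) by (apply Rdiv_lt_0_compat; lra); nra).
  set (D := INR L * (1 - c)).
  assert (HS : S = (1 - B)^2 / (B * D)).
  { unfold D. apply (Rmult_eq_reg_r (/ INR L)). 2: apply Rinv_neq_0_compat; lra.
    replace (S * / INR L) with (S / INR L) by reflexivity. rewrite <- Heq. field. repeat split; lra. }
  assert (HD0 : 0 < D) by (unfold D; nra).
  assert (HD1 : D <= 2 * a) by (unfold D; assert (INR L * (2*a/INR L) = 2 * a) by (field; lra); nra).
  assert (HD2 : 2 * a <= D * (1 + 2 * a / INR L)).
  { unfold D. assert (INR L * (2*a/INR L) = 2 * a) by (field; lra). nra. }
  assert (HN : 0 < (1 - B)^2 / B) by (apply Rdiv_lt_0_compat; nra).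
  assert (HG : G a = ((1 - B)^2 / B) / (2 * a)) by (unfold G; fold B; field; lra).
  assert (HS' : S = ((1 - B)^2 / B) / D) by (rewrite HS; field; lra).
  split; [exact Ha|split].
  - rewrite HG, HS'. apply Rmult_le_compat_l. lra. apply Rinv_le_contravar; lra.
  - rewrite HG, HS'. set (N := (1 - B)^2 / B) in *.
    apply (Rmult_le_reg_r (D * (2 * a))). nra.
    replace (N / D * (D * (2 * a))) with (N * (2*a)) by (field; lra).
    replace (N / (2 * a) * (1 + 2 * a / INR L) * (D * (2 * a))) with (N * (D * (1 + 2 * a / INR L))) by (field; lra).
    apply Rmult_le_compat_l; lra.
Qed.
Lemma G_lt_inv x y : 0 < x -> 0 < y -> G x < G y -> x < y.
Proof. intros. destruct (Rlt_le_dec x y); auto. destruct r.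
  - assert (G y < G x) by (apply G_strict; lra). lra.
  - subst. lra. Qed.

Theorem mainTheorem3 (P sb2 : R) (beta : nat -> R) (alpha : R) :
  0 < P -> 0 < sb2 ->
  (forall L : nat, (1 <= L)%nat ->
     0 < beta L < 1 /\ beta_eq P sb2 L (beta L)) ->
  0 < alpha -> alpha_eq P sb2 alpha ->
  is_lim_seq (Csum beta) (alpha / ln 2).
Proof.
  intros HP Hs Hbeta Hal Heqa.
  set (SS := P / sb2).
  assert (HGa : G alpha = SS) by exact Heqa.
  set (a := fun n : nat => - INR n * ln (beta n)).
  assert (Hb : forall L, (1 <= L)%nat -> 0 < a L /\ G (a L) <= SS /\ SS <= G (a L) * (1 + 2 * a L / INR L)).
  { intros L HL. destruct (Hbeta L HL) as [Hb1 Hb2]. apply per_L; auto.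
    unfold beta_eq in Hb2. rewrite Hb2. unfold SS. field. split. lra.
    apply not_0_INR. lia. }
  assert (Hlim : is_lim_seq a alpha).
  { apply is_lim_seq_spec. intro eps.
    set (d := Rmin eps alpha / 2).
    assert (Hd0 : 0 < d) by (unfold d; apply Rmin_case; generalize (cond_pos eps); lra).
    assert (Hd1 : d < eps) by (unfold d; generalize (Rmin_l eps alpha) (cond_pos eps); lra).
    assert (Hd2 : d < alpha) by (unfold d; generalize (Rmin_r eps alpha); lra).
    set (g0 := G (alpha - d)).
    assert (Hg0 : g0 < SS) by (rewrite <- HGa; apply G_strict; lra).
    assert (Hg0p : 0 < g0).
    { unfold g0. rewrite G_G2 by lra. unfold G2. apply Rdiv_lt_0_compat. 2: lra.
      assert (exp (- (alpha - d)) < exp (alpha - d)) by (apply exp_increasing; lra). nra. }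
    assert (Hq : 0 <= 2 * alpha * g0 / (SS - g0)) by (apply Rdiv_le_0_compat; nra).
    destruct (nfloor_ex _ Hq) as [n Hn].
    exists (S n). intros L HL.
    assert (HL1 : (1 <= L)%nat) by lia.
    assert (HLr : INR (S n) <= INR L) by (apply le_INR; lia).
    rewrite S_INR in HLr.
    assert (HLp : 0 < INR L) by (apply lt_0_INR; lia).
    destruct (Hb L HL1) as [Ha0 [Ha1 Ha2]].
    assert (Hle : a L <= alpha) by (apply G_le_inv; lra).
    assert (Hbig : g0 * (1 + 2 * alpha / INR L) < SS).
    { assert (2 * alpha * g0 < (SS - g0) * INR L).
      { assert (2 * alpha * g0 / (SS - g0) < INR L) by lra.
        apply (Rmult_lt_compat_l (SS - g0)) in H; [|lra].
        replace ((SS - g0) * (2 * alpha * g0 / (SS - g0))) with (2 * alpha * g0) in H by (field; lra). lra. }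
      replace (g0 * (1 + 2 * alpha / INR L)) with (g0 + 2 * alpha * g0 / INR L) by (field; lra).
      assert (2 * alpha * g0 / INR L < SS - g0).
      { apply (Rmult_lt_reg_r (INR L)); auto. replace (2 * alpha * g0 / INR L * INR L) with (2*alpha*g0) by (field; lra). lra. }
      lra. }
    assert (Hf : 0 < 1 + 2 * a L / INR L) by (assert (0 < 2 * a L / INR L) by (apply Rdiv_lt_0_compat; lra); lra).
    assert (Hmono : 2 * a L / INR L <= 2 * alpha / INR L) by (apply Rmult_le_compat_r; [left; apply Rinv_0_lt_compat; lra| lra]).
    assert (HgL : g0 < G (a L)).
    { destruct (Rlt_le_dec g0 (G (a L))) as [h|h]; auto.
      assert (G (a L) * (1 + 2 * a L / INR L) <= g0 * (1 + 2 * alpha / INR L)).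
      { apply Rle_trans with (g0 * (1 + 2 * a L / INR L)).
        apply Rmult_le_compat_r; lra. apply Rmult_le_compat_l; lra. }
      lra. }
    assert (alpha - d < a L) by (apply G_lt_inv; [lra|lra|exact HgL]).
    apply Rabs_def1; lra. }
  apply is_lim_seq_ext with (fun n => a n * / ln 2).
  { intro n. unfold Csum, log2, a. unfold Rdiv. ring. }
  replace (alpha / ln 2) with (alpha * / ln 2) by reflexivity.
  apply (is_lim_seq_scal_r a (/ ln 2) alpha Hlim).
Qed.
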